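(* Let $\mathsf d_Y\le\mathsf d_X$, let $C(\theta_1)$ be a symmetric positive definite $\mathsf d_X\times\mathsf d_X$ matrix depending differentiably on $\theta_1\in\mathbb R^{\mathsf p_1}$, and let $H_x$ be a $\mathsf d_Y\times\mathsf d_X$ matrix with $\mathrm{rank}(H_x)=\mathsf d_Y$; set $V=H_xCH_x^\star$. Then, at any fixed $\theta_1$, $$\mathrm{Tr}\big\{V^{-1}H_x(\partial_1C)H_x^\star V^{-1}H_x(\partial_1C)H_x^\star\big\}\le\mathrm{Tr}\big\{C^{-1}(\partial_1C)C^{-1}\partial_1C\big\}$$ in the partial order of symmetric $\mathsf p_1\times\mathsf p_1$ matrices.
   Context: Here $\star$ denotes transpose and $\partial_1C$ the collection $(\partial_{\theta_{1,k}}C)_{k=1}^{\mathsf p_1}$; for matrices $P,Q$ of matching sizes, $\mathrm{Tr}\{P(\partial_1C)Q\,\partial_1C\}$ denotes the $\mathsf p_1\times\mathsf p_1$ matrix whose $(k,l)$ entry is $\mathrm{Tr}\{P(\partial_{\theta_{1,k}}C)Q\,\partial_{\theta_{1,l}}C\}$ (and analogously for the left-hand side with $H_x(\partial_{\theta_{1,k}}C)H_x^\star$). For symmetric matrices, $M_1\le M_2$ means $M_2-M_1$ is nonnegative definite. In the paper this is applied with $C=C(z,\theta_1^* )$, $H_x=H_x(z,\theta_3^* )$ at each point $z$. *)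

(* Defs.v *)
From HB Require Import structures.
From mathcomp Require Import all_boot all_order all_algebra.
From mathcomp Require Import all_classical all_reals all_analysis.
Set Implicit Arguments. Unset Strict Implicit. Unset Printing Implicit Defensive.
Import Order.TTheory GRing.Theory Num.Theory.
Import numFieldNormedType.Exports.
Local Open Scope ring_scope.

Definition sym_posdef {R : realType} {n : nat} (A : 'M[R]_n) : Prop :=
  A^T = A /\ forall x : 'cV[R]_n, x != 0 -> 0 < (x^T *m A *m x) 0 0.

Definition nonneg_def {R : realType} {n : nat} (A : 'M[R]_n) : Prop :=
  forall x : 'cV[R]_n, 0 <= (x^T *m A *m x) 0 0.

Definition loewner_le {R : realType} {n : nat} (M1 M2 : 'M[R]_n) : Prop :=
  M1^T = M1 /\ M2^T = M2 /\ nonneg_def (M2 - M1).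

Definition partial {R : realType} {p m n : nat}
  (C : 'rV[R]_p -> 'M[R]_(m, n)) (k : 'I_p) (theta : 'rV[R]_p) : 'M[R]_(m, n) :=
  'D_(delta_mx 0 k) C theta.

Definition tr_mat {R : realType} {p d : nat} (P Q : 'M[R]_d) (D : 'I_p -> 'M[R]_d)
  : 'M[R]_p := \matrix_(k, l) \tr (P *m D k *m Q *m D l).

(* Main.v *)
Require Import Defs.
From HB Require Import structures.
From mathcomp Require Import all_boot all_order all_algebra.
From mathcomp Require Import all_classical all_reals all_analysis.
From mathcomp Require Import lra.
Import Order.TTheory GRing.Theory Num.Theory.
Import numFieldNormedType.Exports.
Local Open Scope ring_scope.

Lemma quad_cong (R : realType) m n (M : 'M[R]_m) (X : 'M[R]_(m,n)) :
  nonneg_def M -> nonneg_def (X^T *m M *m X).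
Proof.
move=> hM x.
have -> : x^T *m (X^T *m M *m X) *m x = (X *m x)^T *m M *m (X *m x).
  by rewrite trmx_mul !mulmxA.
exact: hM.
Qed.

Lemma quad_block (R : realType) p1 p2 (a : 'M[R]_p1) b c (d : 'M[R]_p2)
  (x1 : 'cV[R]_p1) (x2 : 'cV[R]_p2) :
  (col_mx x1 x2)^T *m block_mx a b c d *m col_mx x1 x2 =
  x1^T *m a *m x1 + x1^T *m b *m x2 + (x2^T *m c *m x1 + x2^T *m d *m x2).
Proof.
by rewrite tr_col_mx mul_row_block mul_row_col !mulmxDl addrACA.
Qed.

Lemma tr_psd_step (R : realType) n
  (IH : forall A M : 'M[R]_n, A^T = A ->
    (forall x : 'cV_n, x != 0 -> 0 < (x^T *m A *m x) 0 0) ->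
    nonneg_def M -> 0 <= \tr (A *m M))
  (A M : 'M[R]_(1 + n)) : A^T = A ->
    (forall x : 'cV_(1 + n), x != 0 -> 0 < (x^T *m A *m x) 0 0) ->
    nonneg_def M -> 0 <= \tr (A *m M).
Proof.
move=> hAs hA hM.
set a := ulsubmx A; set u := ursubmx A; set l := dlsubmx A; set d := drsubmx A.
have hl : l = u^T by rewrite /l /u trmx_ursub hAs.
have hd : d^T = d by rewrite /d trmx_drsub hAs.
set al := a 0 0.
have ha : a = al%:M by apply: mx11_scalar.
have hAb : A = block_mx a u l d by rewrite submxK.
have al_gt0 : 0 < al.
  have := hA (col_mx 1%:M 0).
  rewrite hAb quad_block trmx1 trmx0 !mulmx0 !mul0mx !mul1mx !mulmx1 !addr0.
 
  apply; apply/eqP => /eqP; rewrite col_mx_eq0 => /andP[/eqP/matrixP/(_ 0 0)].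
  by rewrite !mxE => /eqP; rewrite oner_eq0.
have al0 : al != 0 by rewrite gt_eqF.
set S := d - al^-1 *: (l *m u).
set E : 'M[R]_(1 + n) := block_mx 1%:M (al^-1 *: u) 0 1%:M.
set B : 'M[R]_(1 + n) := block_mx a 0 0 S.
have hAE : A = E^T *m B *m E.
  rewrite /E /B tr_block_mx !mulmx_block hAb.
  rewrite !trmx1 trmx0 !mul1mx !mul0mx !mulmx0 !mulmx1 !addr0 !add0r.
  rewrite ha mul_scalar_mx mul_mx_scalar scalerA mulfV // scale1r.
  rewrite [(_ *: u)^T]linearZ /= scalerA mulfV // scale1r -hl -scalemxAr.
  by rewrite /S addrC subrK.
have hSs : S^T = S.
  by rewrite /S linearB /= linearZ /= trmx_mul hd hl trmxK.
have hSpd : forall y : 'cV_n, y != 0 -> 0 < (y^T *m S *m y) 0 0.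
  move=> y y0.
  have := hA (col_mx (- (al^-1 *: (u *m y))) y).
  have hEx : E *m col_mx (- (al^-1 *: (u *m y))) y = col_mx 0 y.
    by rewrite /E mul_block_col !mul1mx mul0mx add0r -scalemxAl addNr.
  have -> : forall x : 'cV_(1 + n), x^T *m A *m x = (E *m x)^T *m B *m (E *m x).
    by move=> x; rewrite hAE trmx_mul !mulmxA.
  rewrite hEx quad_block /B trmx0 !mulmx0 !mul0mx !add0r.
  by apply; rewrite col_mx_eq0 negb_and y0 orbT.
have -> : \tr (A *m M) = \tr (B *m (E *m M *m E^T)).
  by rewrite hAE -!mulmxA mxtrace_mulC !mulmxA.
set N := E *m M *m E^T.
have hN : nonneg_def N.
  by rewrite /N -{1}(trmxK E); apply: quad_cong.
rewrite -(submxK N) /B mulmx_block !mul0mx !addr0 !add0r mxtrace_block.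
apply: addr_ge0.
  rewrite ha mul_scalar_mx mxtraceZ; apply: mulr_ge0; first exact: ltW.
  have := hN (col_mx 1%:M 0).
  rewrite -{1}(submxK N) quad_block trmx1 trmx0 !mulmx0 !mul0mx !mul1mx !mulmx1 !addr0.
  by rewrite /mxtrace big_ord1.
apply: IH => // y.
have := hN (col_mx 0 y).
by rewrite -{1}(submxK N) quad_block trmx0 !mulmx0 !mul0mx !add0r.
Qed.

Lemma tr_psd (R : realType) n (A M : 'M[R]_n) : A^T = A ->
    (forall x : 'cV_n, x != 0 -> 0 < (x^T *m A *m x) 0 0) ->
    nonneg_def M -> 0 <= \tr (A *m M).
Proof.
elim: n A M => [|n IH] A M hAs hA hM.
  by rewrite /mxtrace big_ord0.
exact (@tr_psd_step R n IH A M hAs hA hM).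
Qed.

Lemma D_coord (R : realType) p m n (F : 'rV[R]_p -> 'M[R]_(m,n)) th v i j :
  differentiable F th -> ('D_v F th) i j = 'D_v (fun t => F t i j) th.
Proof.
move=> dF.
have @f : {linear 'M[R]_(m, n) -> R}.
  by exists (fun N : 'M[R]_(_, _) => N i j); do 2![eexists]; do ?[constructor];
     rewrite ?mxE// => ? *; rewrite ?mxE//; move=> ?; rewrite !mxE.
have cf : continuous f by exact: coord_continuous.
have -> : (fun t => F t i j) = f \o F by [].
have df : forall x, differentiable f x by move=> x; exact: linear_differentiable.
rewrite (deriveE v dF) (deriveE v (differentiable_comp dF (df _))).
rewrite (diff_comp dF (df _)) /=.
by have := diff_lin (F th) cf => /(congr1 (fun g => g (('d F th) v))) ->.
Qed.

Lemma partial_sym (R : realType) p n (C : 'rV[R]_p -> 'M[R]_n) k th :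
  (forall t, (C t)^T = C t) -> differentiable C th ->
  (partial C k th)^T = partial C k th.
Proof.
move=> hs dC; apply/matrixP => i j; rewrite mxE /partial !D_coord //.
by congr ('D_ _ _ _); apply/funext => t; rewrite -{1}hs mxE.
Qed.

Lemma quad_tr_mat (R : realType) p d (P Q : 'M[R]_d) (Dk : 'I_p -> 'M[R]_d)
  (x : 'cV[R]_p) :
  (x^T *m tr_mat P Q Dk *m x) 0 0 =
  \tr (P *m (\sum_k x k 0 *: Dk k) *m Q *m (\sum_k x k 0 *: Dk k)).
Proof.
have -> : P *m (\sum_k x k 0 *: Dk k) *m Q *m (\sum_k x k 0 *: Dk k) =
    \sum_l \sum_k (x k 0 * x l 0) *: (P *m Dk k *m Q *m Dk l).
  rewrite mulmx_sumr; apply: eq_bigr => l _.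
  rewrite mulmx_sumr mulmx_suml mulmx_suml; apply: eq_bigr => k _.
  by rewrite -!scalemxAr -!scalemxAl scalerA mulrC.
rewrite linear_sum mxE /=; apply: eq_bigr => l _.
rewrite mxE big_distrl linear_sum /=; apply: eq_bigr => k _.
by rewrite !mxE mxtraceZ mulrAC mulrC.
Qed.

Lemma pd_psd (R : realType) n (A : 'M[R]_n) :
  (forall x : 'cV_n, x != 0 -> 0 < (x^T *m A *m x) 0 0) -> nonneg_def A.
Proof.
move=> hA x; have [->|x0] := eqVneq x 0.
  by rewrite mulmx0 mxE.
exact/ltW/hA.
Qed.

Lemma pd_unit (R : realType) n (A : 'M[R]_n) :
  (forall x : 'cV_n, x != 0 -> 0 < (x^T *m A *m x) 0 0) -> A \in unitmx.
Proof.
move=> hA; rewrite unitmxE unitfE; apply/negP => /det0P [v v0 hv].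
have : v^T != 0 by rewrite trmx_eq0.
move=> /hA; by rewrite trmxK hv mul0mx mxE ltxx.
Qed.

Lemma tr_mat_sym (R : realType) p d (P : 'M[R]_d) (Dk : 'I_p -> 'M[R]_d) :
  (tr_mat P P Dk)^T = tr_mat P P Dk.
Proof.
apply/matrixP => k l; rewrite !mxE.
by rewrite -[P *m Dk l *m P *m Dk k]mulmxA mxtrace_mulC !mulmxA.
Qed.

Lemma key (R : realType) n (Cm K A DD : 'M[R]_n) : Cm^T = Cm ->
  (forall x : 'cV_n, x != 0 -> 0 < (x^T *m Cm *m x) 0 0) ->
  K^T = K -> DD^T = DD -> K *m Cm *m K = K -> nonneg_def A ->
  0 <= \tr (K *m DD *m A *m DD).
Proof.
move=> hCs hCpd hK hD hKCK hA.
have h := @tr_psd R n Cm _ hCs hCpd (@quad_cong R n n A (DD *m K) hA).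
rewrite -{1}hKCK -!mulmxA mxtrace_mulC !mulmxA.
by move: h; rewrite trmx_mul hK hD !mulmxA.
Qed.

Arguments quad_cong {R m n M} X.
Arguments pd_psd {R n A}.
Arguments pd_unit {R n A}.
Arguments tr_mat_sym {R p d}.
Arguments key {R n Cm K A DD}.
Arguments quad_tr_mat {R p d} P Q Dk x.

Theorem proposition13p1 (R : realType) (dX dY p1 : nat)
  (C : 'rV[R]_p1 -> 'M[R]_dX) (Hx : 'M[R]_(dY, dX)) (theta1 : 'rV[R]_p1) :
  (dY <= dX)%N ->
  (forall th : 'rV[R]_p1, sym_posdef (C th)) ->
  (forall th : 'rV[R]_p1, differentiable C th) ->
  \rank Hx = dY ->
  let V := Hx *m C theta1 *m Hx^T in
  loewner_le
    (tr_mat (invmx V) (invmx V) (fun k => Hx *m partial C k theta1 *m Hx^T))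
    (tr_mat (invmx (C theta1)) (invmx (C theta1)) (fun k => partial C k theta1)).
Proof.
move=> _ hC hdiff hrank V.
set Cm := C theta1.
have [hCs hCpd] := hC theta1.
have hDs : forall k, (partial C k theta1)^T = partial C k theta1.
  by move=> k; apply: partial_sym => // t; case: (hC t).
have hVs : V^T = V by rewrite /V !trmx_mul trmxK hCs mulmxA.
have hVpd : forall x : 'cV_dY, x != 0 -> 0 < (x^T *m V *m x) 0 0.
  move=> x x0.
  have -> : x^T *m V *m x = (Hx^T *m x)^T *m Cm *m (Hx^T *m x).
    by rewrite /V trmx_mul trmxK !mulmxA.
  apply: hCpd; apply: contraNneq x0 => h0.
  have : x^T *m Hx == 0 by rewrite -[Hx]trmxK -trmx_mul h0 trmx0.
  rewrite mulmx_free_eq0; last by rewrite /row_free hrank.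
  by rewrite trmx_eq0.
have Cu := pd_unit hCpd.
have Vu := pd_unit hVpd.
set Ci := invmx Cm; set Vi := invmx V.
have hCis : Ci^T = Ci by rewrite /Ci trmx_inv hCs.
have hVis : Vi^T = Vi by rewrite /Vi trmx_inv hVs.
set Q := Hx^T *m Vi *m Hx.
set K := Ci - Q.
have hQs : Q^T = Q by rewrite /Q !trmx_mul trmxK hVis mulmxA.
have hKs : K^T = K by rewrite /K linearB /= hCis hQs.
have hQCQ : Q *m Cm *m Q = Q.
  have -> : Q *m Cm *m Q = Hx^T *m (Vi *m V) *m Vi *m Hx by rewrite /Q /V !mulmxA.
  by rewrite mulVmx // mulmx1.
have hKCK : K *m Cm *m K = K.
  rewrite /K mulmxBl mulVmx // mulmxBl mul1mx mulmxBr -mulmxA mulmxV // mulmx1.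
  by rewrite hQCQ subrr subr0.
have hVipsd : nonneg_def Vi.
  have -> : Vi = Vi^T *m V *m Vi by rewrite hVis mulVmx // mul1mx.
  exact: quad_cong (pd_psd hVpd).
have hQpsd : nonneg_def Q by exact: quad_cong.
have hKpsd : nonneg_def K.
  rewrite -hKCK -{1}hKs; exact: quad_cong (pd_psd hCpd).
split; first exact: tr_mat_sym.
split; first exact: tr_mat_sym.
move=> x.
have hsub : forall A B : 'M[R]_1, (A - B) 0 0 = A 0 0 - B 0 0 by move=> A B; rewrite !mxE.
rewrite mulmxBr mulmxBl hsub !quad_tr_mat.
set DD := \sum_k x k 0 *: partial C k theta1.
have hDD : DD^T = DD.
  rewrite /DD linear_sum; apply: eq_bigr => k _; by rewrite linearZ /= hDs.
have -> : \sum_k x k 0 *: (Hx *m partial C k theta1 *m Hx^T) = Hx *m DD *m Hx^T.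
  rewrite /DD mulmx_sumr mulmx_suml; apply: eq_bigr => k _.
  by rewrite -scalemxAr -scalemxAl.
have -> : \tr (Vi *m (Hx *m DD *m Hx^T) *m Vi *m (Hx *m DD *m Hx^T)) =
          \tr (Q *m DD *m Q *m DD).
  by rewrite /Q !mulmxA [LHS]mxtrace_mulC !mulmxA.
have hCi : Ci = Q + K by rewrite /K addrC subrK.
clearbody K; rewrite hCi.
rewrite !mulmxDl !mulmxDr !mulmxDl !mxtraceD.
have h1 := key hCs hCpd hKs hDD hKCK hQpsd.
have h2 := key hCs hCpd hKs hDD hKCK hKpsd.
have h3 : \tr (Q *m DD *m K *m DD) = \tr (K *m DD *m Q *m DD).
  by rewrite -[Q *m DD *m K *m DD]mulmxA mxtrace_mulC !mulmxA.
rewrite h3.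
lra.
Qed.
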